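(* Let $\bm X=[\bm x_1,\dots,\bm x_p]\in\mathbb{R}^{n\times p}$ have full column rank and unit-norm columns. Fix $j\in[p]$, let $\bm X_{\backslash j}$ be $\bm X$ with column $j$ removed, let $\bm X_{\backslash j}=\bm U_{\backslash j}\bm D_{\backslash j}\bm V_{\backslash j}^\top$ be a (thin) singular value decomposition with $\bm U_{\backslash j}\in\mathbb{R}^{n\times(p-1)}$ having orthonormal columns, and let $\sigma_j^2=\|\bm x_j-\bm U_{\backslash j}\bm U_{\backslash j}^\top\bm x_j\|^2$ (so $\sigma_j>0$). For $s_j\in\mathbb{R}$, a vector $\widetilde{\bm x}_j\in\mathbb{R}^n$ satisfies (i) $\bm X_{\backslash j}^\top\widetilde{\bm x}_j=\bm X_{\backslash j}^\top\bm x_j$, (ii) $\bm x_j^\top\widetilde{\bm x}_j=1-s_j$, (iii) $\widetilde{\bm x}_j^\top\widetilde{\bm x}_j=1$ if and only if $s_j\in[0,2\sigma_j^2]$ and $$\widetilde{\bm x}_j=\frac{s_j}{\sigma_j^2}\bm U_{\backslash j}\bm U_{\backslash j}^\top\bm x_j+\Big(1-\frac{s_j}{\sigma_j^2}\Big)\bm x_j+\bm r_j$$ for some vector $\bm r_j\in\mathbb{R}^n$ with $\bm X^\top\bm r_j=\bm 0$ and $\|\bm r_j\|=(2s_j-s_j^2/\sigma_j^2)^{1/2}$. *)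

(* Defs.v *)
From HB Require Import structures.
From mathcomp Require Import all_boot all_order all_algebra.
Set Implicit Arguments. Unset Strict Implicit. Unset Printing Implicit Defensive.
Import Order.TTheory GRing.Theory Num.Theory.
Local Open Scope ring_scope.

Definition dotv (R : nzRingType) (n : nat) (u v : 'cV[R]_n) : R := (u^T *m v) 0 0.
Definition sqnorm (R : nzRingType) (n : nat) (v : 'cV[R]_n) : R := dotv v v.
Definition norm2 (R : rcfType) (n : nat) (v : 'cV[R]_n) : R := Num.sqrt (sqnorm v).

(* Main.v *)
Require Import Defs.
From HB Require Import structures.
From mathcomp Require Import all_boot all_order all_algebra.
From mathcomp Require Import ring lra.
Import Order.TTheory GRing.Theory Num.Theory.
Local Open Scope ring_scope.
Section Dot.
Context {R : rcfType}.
Context {n : nat}.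
Implicit Types u v w : 'cV[R]_n.

Lemma dotvC u v : dotv u v = dotv v u.
Proof. by rewrite /dotv [in RHS](_ : v^T *m u = (u^T *m v)^T) ?mxE // trmx_mul trmxK. Qed.

Lemma dotvDr u v w : dotv u (v + w) = dotv u v + dotv u w.
Proof. by rewrite /dotv mulmxDr mxE. Qed.
Lemma dotvDl u v w : dotv (v + w) u = dotv v u + dotv w u.
Proof. by rewrite dotvC dotvDr !(dotvC u). Qed.
Lemma dotvNr u v : dotv u (- v) = - dotv u v.
Proof. by rewrite /dotv mulmxN mxE. Qed.
Lemma dotvNl u v : dotv (- v) u = - dotv v u.
Proof. by rewrite dotvC dotvNr dotvC. Qed.
Lemma dotvBr u v w : dotv u (v - w) = dotv u v - dotv u w.
Proof. by rewrite dotvDr dotvNr. Qed.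
Lemma dotvBl u v w : dotv (v - w) u = dotv v u - dotv w u.
Proof. by rewrite dotvDl dotvNl. Qed.
Lemma dotvZr u v k : dotv u (k *: v) = k * dotv u v.
Proof. by rewrite /dotv -scalemxAr mxE. Qed.
Lemma dotvZl u v k : dotv (k *: v) u = k * dotv v u.
Proof. by rewrite dotvC dotvZr dotvC. Qed.
Lemma dotv0r u : dotv u 0 = 0.
Proof. by rewrite /dotv mulmx0 mxE. Qed.
Lemma dotvM k (A : 'M[R]_(n, k)) u (y : 'cV[R]_k) :
  dotv u (A *m y) = dotv (A^T *m u) y.
Proof. by rewrite /dotv trmx_mul trmxK mulmxA. Qed.
Lemma dotvE u v : dotv u v = \sum_i u i 0 * v i 0.
Proof. by rewrite /dotv mxE; apply: eq_bigr => i _; rewrite mxE. Qed.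
Lemma dotv_ge0 u : 0 <= dotv u u.
Proof. by rewrite dotvE; apply: sumr_ge0 => i _; rewrite -expr2 sqr_ge0. Qed.
Lemma dotv_eq0 u : dotv u u = 0 -> u = 0.
Proof.
rewrite dotvE => h; apply/matrixP => i k; rewrite (ord1 k) mxE.
have H : forall i0 : 'I_n, true -> 0 <= u i0 0 * u i0 0.
  by move=> i0 _; rewrite -expr2 sqr_ge0.
apply/eqP; rewrite -sqrf_eq0 expr2; apply/eqP.
exact: (psumr_eq0P H h).
Qed.
Lemma dotv0l u : dotv 0 u = 0.
Proof. by rewrite dotvC dotv0r. Qed.
End Dot.

Lemma splitX (R : rcfType) n m (X : 'M[R]_(n, m.+1)) j (v : 'cV[R]_m.+1) :
  X *m v = v j 0 *: col j X + col' j X *m row' j v.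
Proof.
apply/matrixP => i k; rewrite (ord1 k) !mxE (bigD1_ord j) //= mulrC; congr (_ + _).
by apply: eq_bigr => l _; rewrite !mxE.
Qed.

Lemma trsplit (R : rcfType) n m (X : 'M[R]_(n, m.+1)) j (r : 'cV[R]_n) :
  X^T *m r = 0 <-> dotv (col j X) r = 0 /\ (col' j X)^T *m r = 0.
Proof.
have e1 : dotv (col j X) r = (X^T *m r) j 0.
  by rewrite /dotv tr_col -row_mul; rewrite ?mxE.
have e2 : (col' j X)^T *m r = row' j (X^T *m r).
  by apply/matrixP => i k; rewrite !mxE; apply: eq_bigr => l _; rewrite !mxE.
rewrite e1 e2; split.
  by move=> ->; split; [rewrite mxE | apply/matrixP => i k; rewrite !mxE].
case=> h1 h2; apply/matrixP => i k; rewrite (ord1 k) [RHS]mxE.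
case: (unliftP j i) => [l|] ->; last by [].
by have := congr1 (fun A : 'cV[R]_m => A l 0) h2; rewrite /= !mxE.
Qed.

Lemma vec_id (R : rcfType) n (k : R) (a xj xt : 'cV[R]_n) :
  xt = k *: a + (1 - k) *: xj + (xt - a - (1 - k) *: (xj - a)).
Proof. by apply/matrixP => i l; rewrite !mxE; ring. Qed.

(* p = m.+1 columns; X_{\j} = col' j X (n x m); x_j = col j X.
   Thin SVD X_{\j} = U D V^T with U^T U = I, D = diag(d) with d >= 0,
   V^T V = I. *)
Theorem proposition2p2 (R : rcfType) (n m : nat) (X : 'M[R]_(n, m.+1))
  (j : 'I_m.+1) (U : 'M[R]_(n, m)) (d : 'rV[R]_m) (V : 'M[R]_m)
  (hrank : \rank X = m.+1)
  (hunit : forall i : 'I_m.+1, sqnorm (col i X) = 1)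
  (hU : U^T *m U = 1%:M)
  (hd : forall i : 'I_m, 0 <= d 0 i)
  (hV : V^T *m V = 1%:M)
  (hsvd : col' j X = U *m diag_mx d *m V^T)
  (s : R) (xt : 'cV[R]_n) :
  let xj := col j X in
  let sigma2 := sqnorm (xj - U *m U^T *m xj) in
  ((col' j X)^T *m xt = (col' j X)^T *m xj /\
   dotv xj xt = 1 - s /\
   dotv xt xt = 1)
  <->
  (0 <= s <= 2 * sigma2 /\
   exists r : 'cV[R]_n,
     X^T *m r = 0 /\
     norm2 r = Num.sqrt (2 * s - s ^+ 2 / sigma2) /\
     xt = (s / sigma2) *: (U *m U^T *m xj) + (1 - s / sigma2) *: xj + r).
Proof.
move=> xj sigma2.
set X' := col' j X.
set M := diag_mx d *m V^T.
have hX' : X' = U *m M by rewrite /X' hsvd mulmxA.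
have injX : forall v : 'cV[R]_m.+1, X *m v = 0 -> v = 0.
  move=> v hv.
  have rf : row_free X^T by rewrite /row_free mxrank_tr hrank.
  apply: trmx_inj; rewrite trmx0; apply: (row_free_inj rf).
  by rewrite mul0mx -trmx_mul hv trmx0.
have ins : forall (w : 'cV[R]_m) (c : R), exists v : 'cV[R]_m.+1, v j 0 = c /\ row' j v = w.
  move=> w c; exists (\col_i (if unlift j i is Some k then w k 0 else c)).
  split; first by rewrite mxE unlift_none.
  by apply/matrixP => k l; rewrite (ord1 l) !mxE liftK.
have Minj : forall w : 'cV[R]_m, M *m w = 0 -> w = 0.
  move=> w hw; have [v [hv0 hvw]] := ins w 0.
  have : X *m v = 0 by rewrite (@splitX _ _ _ X j) hv0 scale0r add0r -/X' hvw hX' -mulmxA hw mulmx0.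
  move/injX => v0; rewrite -hvw v0; by apply/matrixP => ? ?; rewrite !mxE.
have Munit : M^T \in unitmx.
  rewrite -row_free_unit -kermx_eq0; apply/eqP.
  apply/row_matrixP => i; rewrite row0.
  have h := mulmx_ker M^T.
  have : M *m (row i (kermx M^T))^T = 0.
    by rewrite -[M in M *m _](trmxK M) -trmx_mul -row_mul h row0 trmx0.
  move/Minj => h0; by rewrite -(trmxK (row i _)) h0 trmx0.
have MunitM : M \in unitmx by rewrite -unitmx_tr.
have F2 : forall w : 'cV[R]_n, X'^T *m w = 0 -> U^T *m w = 0.
  move=> w hw.
  have h : M^T *m (U^T *m w) = 0 by rewrite mulmxA -trmx_mul -hX' hw.
  by rewrite -(mulKmx Munit (U^T *m w)) h mulmx0.
set a := U *m U^T *m xj.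
set b := xj - a.
have hsig : sigma2 = dotv b b by [].
have ha : a = U *m U^T *m xj by [].
have hb : b = xj - a by [].
clearbody b a.
have hxj : xj = a + b by rewrite hb addrC subrK.
have Ub : U^T *m b = 0 by rewrite hb ha mulmxBr !mulmxA hU mul1mx subrr.
have dUb : forall y : 'cV[R]_m, dotv (U *m y) b = 0.
  by move=> y; rewrite dotvC dotvM Ub dotv0l.
have ab : dotv a b = 0 by rewrite ha -mulmxA dUb.
have xjn : dotv xj xj = 1 := hunit j.
have xjb : dotv xj b = sigma2 by rewrite hxj dotvDl ab add0r.
have haa : dotv a a = 1 - sigma2.
  move: xjn; rewrite hxj !dotvDl !dotvDr (dotvC b a) ab -hsig => h.
  by rewrite -h; ring.
have xja : dotv xj a = 1 - sigma2 by rewrite hxj dotvDl haa (dotvC b) ab addr0.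
have sig0 : 0 < sigma2.
  rewrite lt_def hsig dotv_ge0 andbT; apply/eqP => s0.
  have b0 : b = 0 by apply: dotv_eq0.
  set y := invmx M *m (U^T *m xj).
  have hy : X' *m y = xj.
    rewrite /y hX' -mulmxA (mulmxA M) mulmxV // mul1mx mulmxA -ha.
    by rewrite hxj b0 addr0.
  have [v [hv0 hvy]] := ins y (-1).
  have : X *m v = 0 by rewrite (@splitX _ _ _ X j) hv0 -/X' hvy hy scaleN1r addNr.
  move/injX => v0; move: hv0; rewrite v0 mxE => /eqP.
  by rewrite eq_sym oppr_eq0 oner_eq0.
have sneq : sigma2 != 0 by rewrite gt_eqF.
have hperp : forall r : 'cV[R]_n, X^T *m r = 0 ->
    dotv a r = 0 /\ dotv b r = 0 /\ dotv xj r = 0 /\ X'^T *m r = 0.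
  move=> r /(@trsplit _ _ _ X j) [h1 h2]; have hur := F2 _ h2.
  have ar : dotv a r = 0 by rewrite dotvC ha -mulmxA dotvM hur dotv0l.
  split; first done; split; last by split.
  by rewrite hb dotvBl h1 ar subrr.
have X'b : X'^T *m b = 0 by rewrite hX' trmx_mul -mulmxA Ub mulmx0.
have X'a : X'^T *m a = X'^T *m xj.
  by rewrite hX' trmx_mul ha -!mulmxA (mulmxA U^T U) hU mul1mx.
split.
- case=> [h1 [h2 h3]].
  have hw : U^T *m (xt - xj) = 0 by apply: F2; rewrite mulmxBr h1 subrr.
  have xta : dotv xt a = 1 - sigma2.
    have : dotv (xt - xj) a = 0 by rewrite ha -mulmxA dotvM hw dotv0l.
    by rewrite dotvBl xja => /eqP; rewrite subr_eq0 => /eqP.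
  have xtb : dotv xt b = sigma2 - s.
    by rewrite hb dotvBr (dotvC xt xj) h2 xta; ring.
  set c := 1 - s / sigma2.
  set r := xt - a - c *: b.
  have Xr : X^T *m r = 0.
    apply/(@trsplit _ _ _ X j); split.
      by rewrite /r !dotvBr dotvZr -/xj h2 xja xjb /c; field.
    by rewrite /r !mulmxBr -scalemxAr -/X' X'a X'b scaler0 subr0 h1 subrr.
  have rr : dotv r r = 2 * s - s ^+ 2 / sigma2.
    have [ar [br _]] := hperp r Xr.
    have E : dotv r r = dotv r (xt - a - c *: b) by [].
    rewrite E !dotvBr dotvZr (dotvC r a) (dotvC r b) ar br.
    have E2 : dotv r xt = dotv (xt - a - c *: b) xt by [].
    by rewrite E2 !dotvBl dotvZl h3 (dotvC a xt) xta (dotvC b xt) xtb /c; field.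
  have rge : 0 <= 2 * s - s ^+ 2 / sigma2 by rewrite -rr dotv_ge0.
  split.
    have hp : 0 <= s * (2 * sigma2 - s).
      rewrite (_ : s * (2 * sigma2 - s) = (2 * s - s ^+ 2 / sigma2) * sigma2).
        exact: mulr_ge0 rge (ltW sig0).
      by field.
    by apply/andP; split; nra.
  exists r; split; first done; split.
    by rewrite /norm2 /sqnorm rr.
  by rewrite (_ : r = xt - a - c *: b) // hb /c; apply: vec_id.
- case=> [/andP [s0 s2] [r [Xr [nr hxt]]]].
  have [ar [br [xjr X'r]]] := hperp r Xr.
  have rge : 0 <= 2 * s - s ^+ 2 / sigma2.
    rewrite (_ : 2 * s - s ^+ 2 / sigma2 = s * (2 * sigma2 - s) / sigma2); last by field.
    apply: divr_ge0; last exact: ltW.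
    by apply: mulr_ge0; lra.
  have rr : dotv r r = 2 * s - s ^+ 2 / sigma2.
    have := congr1 (fun x => x ^+ 2) nr; rewrite /= /norm2 !sqr_sqrtr //.
    exact: dotv_ge0.
  split; [|split].
  + rewrite hxt !mulmxDr -!scalemxAr -/X' X'a X'r addr0 -scalerDl.
    by rewrite (addrC (s / sigma2)) subrK scale1r.
  + by rewrite hxt !dotvDr !dotvZr xja xjn xjr; field.
  + rewrite hxt !dotvDl !dotvDr !dotvZl !dotvZr (dotvC a xj) (dotvC r a) (dotvC r xj).
    by rewrite xja xjn xjr haa ar rr; field.
Qed.
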